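(* There exist a game $\Gamma$ and a principal utility function $U_0$ such that the optimal principal objective value over all $0$-CEPs of $\Gamma$ is strictly greater than the optimal objective value over those $0$-CEPs $(\mu,P)$ in which each $P_i(s,a)$ depends only on $a$ (and not on the signal profile $s$).
   Context: $\Gamma$ has agents $i\in[n]$, finite action sets $A_i$, $A=\prod_iA_i$, utilities $U_i:A\to\mathbb{R}$; principal utility $U_0$ on $A$ (values may be real or $-\infty$). A correlated profile with payments is $(\mu,P)$ with $\mu\in\Delta(A)$, $P_i:A\times A\to\mathbb{R}_+$ ($P_i(s,a)$ = payment to $i$ under recommendation $s$ and played profile $a$). Its objective value is $\mathbb{E}_{a\sim\mu}[U_0(a)-\sum_iP_i(a,a)]$. It is a $0$-CEP if for every $i$ and $\phi_i:A_i\to A_i$, $\mathbb{E}_{a\sim\mu}[U_i(\phi_i(a_i),a_{-i})+P_i(a,(\phi_i(a_i),a_{-i}))-U_i(a)-P_i(a,a)]\le0$. *)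

(* Defs.v *)
From HB Require Import structures.
From mathcomp Require Import all_boot all_order all_algebra.
From mathcomp Require Import boolp classical_sets reals constructive_ereal ereal.
Set Implicit Arguments. Unset Strict Implicit. Unset Printing Implicit Defensive.
Import Order.TTheory GRing.Theory Num.Theory.
Local Open Scope ring_scope.
Local Open Scope classical_set_scope.

Section Game.
Variables (R : realType) (n : nat) (A : 'I_n -> finType).

Definition profile := {dffun forall i : 'I_n, A i}.

Definition dev (a : profile) (i : 'I_n) (x : A i) : profile :=
  [ffun j => @eqtype.dfwith _ A (fun j => a j) i x j].

Definition is_distr (mu : profile -> R) : Prop :=
  (forall a, 0 <= mu a) /\ \sum_(a : profile) mu a = 1.

(* P_i : A x A -> R_+, P i s a = payment to i under recommendation s, play a *)
Definition nonneg_payments (P : 'I_n -> profile -> profile -> R) : Prop :=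
  forall i s a, 0 <= P i s a.

Definition is_0CEP (U : 'I_n -> profile -> R) (mu : profile -> R)
    (P : 'I_n -> profile -> profile -> R) : Prop :=
  is_distr mu /\ nonneg_payments P /\
  forall (i : 'I_n) (phi : A i -> A i),
    \sum_(a : profile) mu a *
      (U i (dev a (phi (a i))) + P i a (dev a (phi (a i)))
        - U i a - P i a a) <= 0.

(* objective E_{a ~ mu}[U_0(a) - sum_i P_i(a,a)], in the extended reals;
   uses the convention 0 * (-oo) = 0 of mathcomp-analysis *)
Definition objective (U0 : profile -> \bar R) (mu : profile -> R)
    (P : 'I_n -> profile -> profile -> R) : \bar R :=
  (\sum_(a : profile) (mu a)%:E * (U0 a - (\sum_(i < n) P i a a)%:E))%E.

Definition signal_independent (P : 'I_n -> profile -> profile -> R) : Prop :=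
  forall i s s' a, P i s a = P i s' a.

Definition opt_value (U : 'I_n -> profile -> R) (U0 : profile -> \bar R)
    (Q : ('I_n -> profile -> profile -> R) -> Prop) : \bar R :=
  ereal_sup [set v | exists mu P, [/\ is_0CEP U mu P, Q P &
                                      v = objective U0 mu P]].
End Game.

(* Main.v *)
Require Import Defs.
From HB Require Import structures.
From mathcomp Require Import all_boot all_order all_algebra.
From mathcomp Require Import boolp classical_sets reals constructive_ereal ereal.
From mathcomp Require Import lra.
Import Order.TTheory GRing.Theory Num.Theory.
Local Open Scope ring_scope.

Definition B2 : 'I_2 -> finType := fun _ => bool.
Definition o0 : 'I_2 := ord0.
Definition o1 : 'I_2 := @Ordinal 2 1 isT.
Definition mk (x y : bool) : profile B2 := [ffun i : 'I_2 => (if i == o0 then x else y : B2 i)].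

Lemma mk0 x y : mk x y o0 = x. Proof. by rewrite ffunE. Qed.
Lemma mk1 x y : mk x y o1 = y. Proof. by rewrite ffunE. Qed.

Lemma ord2P (i : 'I_2) : i = o0 \/ i = o1.
Proof. case: i => [[|[|k]] Hk]; [left; exact: val_inj|right; exact: val_inj|by []]. Qed.

Lemma mkK (a : profile B2) : mk (a o0) (a o1) = a.
Proof. apply/ffunP => i; rewrite ffunE; by case: (ord2P i) => ->. Qed.

Lemma dev0 x y (z : B2 o0) : @dev _ B2 (mk x y) o0 z = mk z y.
Proof.
apply/ffunP => i; rewrite !ffunE; case: (ord2P i) => ->.
  by rewrite dfwith_in.
by rewrite dfwith_out // ffunE.
Qed.

Lemma dev1 x y (z : B2 o1) : @dev _ B2 (mk x y) o1 z = mk x z.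
Proof.
apply/ffunP => i; rewrite !ffunE; case: (ord2P i) => ->.
  by rewrite dfwith_out // ffunE.
by rewrite dfwith_in.
Qed.

Lemma big4 (T : Type) (idx : T) (op : Monoid.com_law idx) (F : profile B2 -> T) :
  \big[op/idx]_(a : profile B2) F a =
  op (op (F (mk true true)) (F (mk true false)))
     (op (F (mk false true)) (F (mk false false))).
Proof.
rewrite (reindex (fun p : bool * bool => mk p.1 p.2)) /=; last first.
  exists (fun a : profile B2 => (a o0, a o1)) => [p _|a _] /=.
    by case: p => x y; rewrite mk0 mk1.
  exact: mkK.
rewrite -(pair_big xpredT xpredT (fun x y => F (mk x y))) /=.
by rewrite !big_bool.
Qed.
Lemma key (R : realType) (m00 m10 m11 a00 a01 a10 a11 b00 b01 b10 b11 : R) :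
  0 <= m00 -> 0 <= m10 -> 0 <= m11 -> m00 + m10 + m11 = 1 ->
  0 <= a00 -> 0 <= a01 -> 0 <= a10 -> 0 <= a11 ->
  0 <= b00 -> 0 <= b01 -> 0 <= b10 -> 0 <= b11 ->
  m11 * (1 + b10 - b11) <= 0 ->
  m00 * (1 + b01 - b00) + m10 * (-1 + b11 - b10) <= 0 ->
  m10 * (1 + a00 - a10) + m11 * (-1 + a01 - a11) <= 0 ->
  1/2 <= m11 * (a11 + b11) + m10 * (a10 + b10) + m00 * (a00 + b00).
Proof.
move=> h00 h10 h11 hs ha00 ha01 ha10 ha11 hb00 hb01 hb10 hb11 E1 E2 E3.
have P1 : 0 <= m00 * a00 by apply: mulr_ge0.
have P2 : 0 <= m00 * b01 by apply: mulr_ge0.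
have P3 : 0 <= m10 * a00 by apply: mulr_ge0.
have P4 : 0 <= m11 * a01 by apply: mulr_ge0.
have P5 : 0 <= m10 * b11 by apply: mulr_ge0.
have P6 : 0 <= m11 * b10 by apply: mulr_ge0.
have P7 : 0 <= m10 * b10 by apply: mulr_ge0.
have P8 : 0 <= m10 * a10 by apply: mulr_ge0.
have P9 : 0 <= m11 * a11 by apply: mulr_ge0.
have P10 : 0 <= m00 * b00 by apply: mulr_ge0.
have P11 : 0 <= m11 * b11 by apply: mulr_ge0.
have Ea : m10 - m11 <= m10 * a10 + m11 * a11 by nra.
have [m11z|m11p] := eqVneq m11 0.
  rewrite m11z in Ea hs *.
  have : m00 - m10 <= m00 * b00 + m10 * b10 by nra.
  nra.
have m11pos : 0 < m11 by rewrite lt_def m11p.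
have Hb : 1 + b10 <= b11.
  rewrite -subr_le0; rewrite -(pmulr_rle0 _ m11pos); lra.
have Hm10 : 0 <= m10 * (-1 + b11 - b10) by apply: mulr_ge0 => //; lra.
have Hb0 : m00 <= m00 * b00 by nra.
have Hc : m11 <= m11 * b11 by nra.
nra.
Qed.

Lemma sum2 (T : Type) (idx : T) (op : Monoid.com_law idx) (F : 'I_2 -> T) :
  \big[op/idx]_(i < 2) F i = op (F o0) (F o1).
Proof. by rewrite big_ord_recl big_ord1; congr (op _ (F _)); apply: val_inj. Qed.

Lemma big4N (M : nmodType) (F : profile B2 -> M) :
  \sum_(a : profile B2) F a =
  F (mk true true) + F (mk true false) + (F (mk false true) + F (mk false false)).
Proof. exact: big4. Qed.

Lemma sum2N (M : nmodType) (F : 'I_2 -> M) : \sum_(i < 2) F i = F o0 + F o1.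
Proof. exact: sum2. Qed.

Lemma o01 : (o0 == o1) = false. Proof. by []. Qed.
Lemma o10 : (o1 == o0) = false. Proof. by []. Qed.

Section Main.
Variable R : realType.

Definition Ug (i : 'I_2) (a : profile B2) : R :=
  if i == o0 then (a o0 == a o1)%:R else (a o0 != a o1)%:R.
Definition U0g (a : profile B2) : \bar R :=
  if ~~ a o0 && a o1 then -oo%E else 2%:E.
Definition muS (a : profile B2) : R := if ~~ a o0 && a o1 then 0 else 3^-1.
Definition PS (i : 'I_2) (s a : profile B2) : R :=
  if (i == o1) && (s o0 == a o0) && (s o1 == a o1) && a o0 && a o1 then 1 else 0.

Lemma lower : ((5/3)%:E <= opt_value Ug U0g (fun _ => True))%E.
Proof.
apply: (le_trans _ (ereal_sup_ubound _)); last first.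
  exists muS, PS; split => //.
  split; [split|split].
  - by move=> a; rewrite /muS; case: ifP => _ //; rewrite invr_ge0.
  - rewrite big4 /muS !mk0 !mk1 /=; lra.
  - by move=> i s a; rewrite /PS; case: ifP.
  - { move=> i; case: (ord2P i) => -> phi; rewrite big4 ?dev0 ?dev1 /Ug /PS /muS !mk0 !mk1 /= ?o01 ?o10 /=.
    all: case: (phi true); case: (phi false); rewrite /= ?mk0 ?mk1 /=; lra. }
rewrite /objective big4 /U0g /muS /PS !mk0 !mk1 /= !sum2 /= ?o01 ?o10 /= mul0e.
have E (x y : R) : (x%:E * (2%:E + (- y)%:E))%E = (x * (2 - y))%:E.
  by rewrite EFinM EFinB.
rewrite !E add0e -!EFinD lee_fin; lra.
Qed.

Lemma upper : (opt_value Ug U0g (@signal_independent R 2 B2) <= (3/2)%:E)%E.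
Proof.
apply: ge_ereal_sup => v [mu [P [[[Hmu0 Hmu1] [Hnn Hce]] Hsi ->]]].
have [p HP] : exists p : 'I_2 -> profile B2 -> R, forall i s a, P i s a = p i a.
  by exists (fun i a => P i a a) => i s a; exact: Hsi.
have Hp i a : 0 <= p i a by rewrite -(HP i a a); exact: Hnn.
have E1 := Hce o1 (fun _ => false).
have E2 := Hce o1 (fun _ => true).
have E3 := Hce o0 (fun _ => false).
rewrite big4N /= ?dev0 ?dev1 /Ug !mk0 !mk1 /= ?o01 ?o10 /= !HP in E1.
rewrite big4N /= ?dev0 ?dev1 /Ug !mk0 !mk1 /= ?o01 ?o10 /= !HP in E2.
rewrite big4N /= ?dev0 ?dev1 /Ug !mk0 !mk1 /= ?o01 ?o10 /= !HP in E3.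
rewrite big4N in Hmu1.
rewrite /objective big4N /U0g !mk0 !mk1 /= !sum2N !HP.
have [m0|mne] := eqVneq (mu (mk false true)) 0.
  rewrite m0 in E1 E2 E3 Hmu1 *; rewrite mul0e.
  have E (x y : R) : (x%:E * (2%:E + (- y)%:E))%E = (x * (2 - y))%:E.
    by rewrite EFinM EFinB.
  rewrite !E add0r -!EFinD lee_fin.
  have K := @key R _ _ _ _ _ _ _ _ _ _ _ (Hmu0 (mk false false)) (Hmu0 (mk true false)) (Hmu0 (mk true true))
    _ (Hp o0 (mk false false)) (Hp o0 (mk false true)) (Hp o0 (mk true false))
    (Hp o0 (mk true true)) (Hp o1 (mk false false)) (Hp o1 (mk false true))
    (Hp o1 (mk true false)) (Hp o1 (mk true true)).
  have K2 := K ltac:(lra) ltac:(lra) ltac:(lra) ltac:(lra); lra.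
have mpos : 0 < mu (mk false true) by rewrite lt_def mne Hmu0.
rewrite addNye gt0_muleNy ?lte_fin // addNye addeNy leNye //.
Qed.

End Main.

Theorem proposition7p4 (R : realType) :
  exists (n : nat) (A : 'I_n -> finType) (U : 'I_n -> profile A -> R)
         (U0 : profile A -> \bar R),
    (opt_value U U0 (@signal_independent R n A)
       < opt_value U U0 (fun _ => True))%E.
Proof.
exists 2, B2, (@Ug R), (@U0g R).
apply: (le_lt_trans (upper R)); apply: (lt_le_trans _ (lower R)).
rewrite lte_fin; lra.
Qed.
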